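(* Let $n,k,l$ be nonnegative integers with $k+l\le n$, let $\alpha,\beta>-1$, set $\sigma=\alpha+\beta+1$, and for $i=k+l,\ldots,n$ and $h=k,\ldots,n-l$ define \[ c_{ih}=\frac{(\alpha+2l+1)_{i-k-l}}{(i-k-l)!}\binom{n}{h}^{-1}\binom{n-k-l}{h-k}\,Q_{i-k-l}(n-l-h;\,\alpha+2l,\,\beta+2k,\,n-k-l). \] Then for each fixed $i$ (and whenever the indices involved lie in the range $k\le h\le n-l$): \[ c_{i,n-l}=\frac{(\alpha+2l+1)_{i-k-l}}{(i-k-l)!}\binom{n}{l}^{-1}, \] \[ c_{i,n-l-1}=c_{i,n-l}\,\frac{(n-k-l)(l+1)}{n-l}\left[1-\frac{(k+l-i)(i+k+l+\sigma)}{(k+l-n)(\alpha+2l+1)}\right], \] and for $h=n-l-2,n-l-3,\ldots,k$, \[ c_{ih}=F_i(h)\,c_{i,h+1}+G(h)\,c_{i,h+2}, \] where \[ H(h)=\frac{(n-l-h-1)(h+k+\beta+2)}{(n+l+\alpha-h)(k-h-1)}, \] \[ F_i(h)=\frac{(n-h)(h+1-k)}{(n-l-h)(h+1)}\left[1-H(h)-\frac{(k+l-i)(i+k+l+\sigma)}{(n+l+\alpha-h)(k-h-1)}\right], \] \[ G(h)=\frac{(n-h-1)_2\,(h+1-k)_2}{(n-l-h-1)_2\,(h+1)_2}\,H(h). \]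
   Context: Pochhammer symbol: $(a)_0=1$, $(a)_j=a(a+1)\cdots(a+j-1)$. Hahn polynomials: for a nonnegative integer $N$, $a,b>-1$ and $m=0,1,\ldots,N$, $Q_m(x;a,b,N)=\sum_{j=0}^m\frac{(-m)_j(m+a+b+1)_j(-x)_j}{j!\,(a+1)_j\,(-N)_j}$. (The numbers $c_{ih}$ are the coefficients of the modified Jacobi polynomial $J_{i,k,l}^{(\alpha,\beta)}(x)=(1-x)^lx^kR^{(\alpha+2l,\beta+2k)}_{i-k-l}(x)$ in the Bernstein basis $B^n_h(x)=\binom nh x^h(1-x)^{n-h}$, $h=k,\ldots,n-l$, where $R^{(a,b)}_m(x)=\frac{(a+1)_m}{m!}\sum_{j=0}^m\frac{(-m)_j(m+a+b+1)_j}{j!(a+1)_j}(1-x)^j$.) *)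

(* Defs.v *)
From HB Require Import structures.
From mathcomp Require Import all_boot all_order all_algebra.
Set Implicit Arguments. Unset Strict Implicit. Unset Printing Implicit Defensive.
Import Order.TTheory GRing.Theory Num.Theory.
Local Open Scope ring_scope.

Definition poch (R : ringType) (a : R) (j : nat) : R :=
  \prod_(t < j) (a + t%:R).

Definition hahnQ (R : fieldType) (m : nat) (x a b : R) (N : nat) : R :=
  \sum_(j < m.+1)
    (poch (- m%:R) j * poch (m%:R + a + b + 1) j * poch (- x) j)
    / ((j`!)%:R * poch (a + 1) j * poch (- N%:R) j).

Definition cih (R : fieldType) (n k l : nat) (alpha beta : R) (i h : nat) : R :=
  poch (alpha + (2 * l)%:R + 1) (i - k - l) / ((i - k - l)`!)%:R
  * ('C(n, h)%:R)^-1 * ('C(n - k - l, h - k))%:R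
  * hahnQ (i - k - l) (n - l - h)%:R (alpha + (2 * l)%:R) (beta + (2 * k)%:R)
          (n - k - l).

Definition Hfun (R : fieldType) (n k l : nat) (alpha beta : R) (h : nat) : R :=
  ((n%:R - l%:R - h%:R - 1) * (h%:R + k%:R + beta + 2))
  / ((n%:R + l%:R + alpha - h%:R) * (k%:R - h%:R - 1)).

Definition Ffun (R : fieldType) (n k l : nat) (alpha beta : R) (i h : nat) : R :=
  let sigma := alpha + beta + 1 in
  ((n%:R - h%:R) * (h%:R + 1 - k%:R)) / ((n%:R - l%:R - h%:R) * (h%:R + 1))
  * (1 - Hfun n k l alpha beta h
       - ((k%:R + l%:R - i%:R) * (i%:R + k%:R + l%:R + sigma))
         / ((n%:R + l%:R + alpha - h%:R) * (k%:R - h%:R - 1))).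

Definition Gfun (R : fieldType) (n k l : nat) (alpha beta : R) (h : nat) : R :=
  (poch (n%:R - h%:R - 1) 2 * poch (h%:R + 1 - k%:R) 2)
  / (poch (n%:R - l%:R - h%:R - 1) 2 * poch (h%:R + 1) 2)
  * Hfun n k l alpha beta h.

(* Main.v *)
Require Import Defs.
From HB Require Import structures.
From mathcomp Require Import all_boot all_order all_algebra.
From mathcomp Require Import ring lra zify.
Import Order.TTheory GRing.Theory Num.Theory.
Local Open Scope ring_scope.


Lemma poch0 (R : comNzRingType) (a : R) : poch a 0 = 1.
Proof. by rewrite /poch big_ord0. Qed.

Lemma pochSr (R : comNzRingType) (a : R) j : poch a j.+1 = poch a j * (a + j%:R).
Proof. by rewrite /poch big_ord_recr. Qed.

Lemma pochSl (R : comNzRingType) (a : R) j : poch a j.+1 = a * poch (a + 1) j.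
Proof.
elim: j => [|j IH]; first by rewrite pochSr !poch0; ring.
by rewrite pochSr IH pochSr; ring.
Qed.

Lemma poch_neq0 (R : fieldType) (a : R) j :
  (forall t, (t < j)%N -> a + t%:R != 0) -> poch a j != 0.
Proof.
elim: j => [|j IH] H; first by rewrite poch0 oner_neq0.
rewrite pochSr mulf_neq0 //; first by apply: IH => t Ht; apply: H; exact: ltnW.
exact: H.
Qed.

Section Hahn.
Variables (R : realFieldType) (m N : nat) (a b : R).
Hypothesis hmN : (m <= N)%N.
Hypothesis ha : -1 < a.

Definition Tc (j : nat) : R :=
  poch (- m%:R) j * poch (m%:R + a + b + 1) j
  / ((j`!)%:R * poch (a + 1) j * poch (- N%:R) j).

Lemma hahnQ_T x : hahnQ m x a b N = \sum_(j < m.+1) Tc j * poch (- x) j.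
Proof. by apply: eq_bigr => j _; rewrite /Tc mulrAC. Qed.

Lemma term_eq x j :
  (x + a + 1) * (x - N%:R) * poch (- (x + 1)) j - ((x + a + 1) * (x - N%:R) + x * (x - b - N%:R - 1)) * poch (- x) j + x * (x - b - N%:R - 1) * poch (- (x - 1)) j
  = j%:R * (j%:R + a + b + 1) * poch (- x) j
    + j%:R * (j%:R + a) * (N%:R - j%:R + 1) * poch (- x) j.-1.
Proof.
set B := (x + a + 1) * (x - N%:R); set D := x * (x - b - N%:R - 1).
case: j => [|j]; first by rewrite !poch0 /=; ring.
have E1 : poch (- (x + 1)) j.+1 = - (x + 1) * poch (- x) j.
  by rewrite pochSl; congr (_ * poch _ _); ring.
have E2 : (- x) * poch (- (x - 1)) j.+1 = poch (- x) j * (- x + j%:R) * (- x + j.+1%:R).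
  rewrite -pochSr -pochSr pochSl; congr (_ * poch _ _); ring.
have -> : D * poch (- (x - 1)) j.+1 = - (x - b - N%:R - 1) * ((- x) * poch (- (x - 1)) j.+1).
  by rewrite /D; ring.
rewrite E1 E2 pochSr /= /B /D. move: (poch (- x) j) => p. ring.
Qed.


Lemma Tc_step j : (j < m)%N ->
  Tc j.+1 * (j.+1%:R * (j.+1%:R + a) * (N%:R - j.+1%:R + 1))
  = (m%:R * (m%:R + a + b + 1) - j%:R * (j%:R + a + b + 1)) * Tc j.
Proof.
move=> hj.
have hjN : (j < N)%N by apply: leq_trans hmN.
have nf : (j`!)%:R != 0 :> R by rewrite pnatr_eq0 -lt0n fact_gt0.
have na : poch (a + 1) j != 0.
  apply: poch_neq0 => t _; rewrite lt0r_neq0 //; move: ha (ler0n R t) => ha' ht0; lra.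
have nN : poch (- N%:R : R) j != 0.
  apply: poch_neq0 => t ht; rewrite addrC subr_eq0 eqr_nat neq_ltn.
  by rewrite (leq_trans ht (ltnW hjN)).
have n1 : (j.+1)%:R != 0 :> R by rewrite pnatr_eq0.
have n2 : a + 1 + j%:R != 0.
  by rewrite lt0r_neq0 //; move: ha (ler0n R j) => ha' ht0; lra.
have n3 : - N%:R + j%:R != 0 :> R.
  by rewrite addrC subr_eq0 eqr_nat neq_ltn hjN.
rewrite /Tc !pochSr factS natrM.
move: (poch (- m%:R) j) (poch (m%:R + a + b + 1) j) (poch (a + 1) j) (poch (- N%:R) j) na nN => p1 p2 p3 p4 na nN.
field.
by rewrite nN na nf n3 n2 /= addrC natr1.
Qed.


Lemma hahn_diff x :
  (x + a + 1) * (x - N%:R) * hahnQ m (x + 1) a b N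
  - ((x + a + 1) * (x - N%:R) + x * (x - b - N%:R - 1)) * hahnQ m x a b N
  + x * (x - b - N%:R - 1) * hahnQ m (x - 1) a b N
  = m%:R * (m%:R + a + b + 1) * hahnQ m x a b N.
Proof.
transitivity (\sum_(j < m.+1) Tc j * (j%:R * (j%:R + a + b + 1) * poch (- x) j
    + j%:R * (j%:R + a) * (N%:R - j%:R + 1) * poch (- x) j.-1)).
  rewrite !hahnQ_T !mulr_sumr -sumrB -big_split /=; apply: eq_bigr => j _.
  rewrite -(term_eq x j).
  move: (Tc j) (poch (-(x+1)) j) (poch (-x) j) (poch (-(x-1)) j) => t p q r; ring.
under eq_bigr do rewrite mulrDr.
rewrite big_split /= [X in _ + X]big_ord_recl /= !mul0r mulr0 add0r.
under [X in _ + X]eq_bigr => j _ do rewrite /bump /= add1n add0n mulrA Tc_step //.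
rewrite big_ord_recr /= hahnQ_T mulr_sumr big_ord_recr /=.
have S : \sum_(i < m) Tc i * (i%:R * (i%:R + a + b + 1) * poch (- x) i)
   + \sum_(i < m) (m%:R * (m%:R + a + b + 1) - i%:R * (i%:R + a + b + 1)) * Tc i * poch (- x) i
   = \sum_(i < m) m%:R * (m%:R + a + b + 1) * (Tc i * poch (- x) i).
  rewrite -big_split /=; apply: eq_bigr => i _.
  move: (Tc i) (poch (- x) i) => t p; ring.
rewrite -S.
move: (\sum_(i < m) _) (\sum_(i < m) _) (Tc m) (poch (- x) m) => s1 s2 t p; ring.
Qed.
End Hahn.



Lemma hahnQ0 (R : realFieldType) m (a b : R) N : hahnQ m 0 a b N = 1.
Proof.
rewrite /hahnQ big_ord_recl big1 ?addr0 => [|j _].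
  by rewrite !poch0 /= !mulr1 divr1.
by rewrite lift0 [poch (- 0) _]pochSl oppr0 mul0r mulr0 mul0r.
Qed.

Lemma hahnQ1 (R : realFieldType) m (a b : R) N (ha1 : a + 1 != 0) (hN : N%:R != 0 :> R) :
  hahnQ m 1 a b N = 1 - m%:R * (m%:R + a + b + 1) / ((a + 1) * N%:R).
Proof.
case: m => [|m]; first by rewrite /hahnQ big_ord_recl big_ord0 !poch0 /= mul0r mul0r subr0 addr0 !mulr1 divr1.
rewrite /hahnQ big_ord_recl big_ord_recl big1 ?addr0 => [|j _].
  rewrite /bump /= !poch0 !pochSr !poch0 /=.
  have -> : ((1`!)%:R : R) = 1 by [].
  field; by rewrite ha1 hN.
by rewrite !lift0 [poch (-1) _]pochSl pochSl addNr mul0r mulr0 mulr0 !mul0r.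
Qed.

Lemma part1 (R : realFieldType) (n k l : nat) (alpha beta : R)
  (hkl : (k + l <= n)%N) (i : nat) :
  cih n k l alpha beta i (n - l)%N =
        poch (alpha + (2 * l)%:R + 1) (i - k - l) / ((i - k - l)`!)%:R
        * ('C(n, l)%:R)^-1.
Proof.
rewrite /cih subnn hahnQ0 mulr1 bin_sub; last by lia.
have -> : (n - l - k = n - k - l)%N by lia.
by rewrite binn mulr1.
Qed.

Lemma natrB3 (R : realFieldType) a b c : (b + c <= a)%N ->
  ((a - b - c)%N%:R : R) = a%:R - b%:R - c%:R.
Proof. move=> h; rewrite natrB; last by lia. rewrite natrB //; lia. Qed.

Lemma natrB2 (R : realFieldType) a b : (b <= a)%N ->
  ((a - b)%N%:R : R) = a%:R - b%:R.
Proof. by move=> h; rewrite natrB. Qed.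

Lemma alg2 (R : realFieldType) (A C n k l i al be L1 : R) :
  L1 = l + 1 -> n - l != 0 -> n - k - l != 0 -> al + 2 * l + 1 != 0 -> C != 0 ->
  L1 != 0 ->
  A / ((n - l) * C / L1) * (n - k - l) *
  (1 - (i - k - l) * (i - k - l + (al + 2 * l) + (be + 2 * k) + 1) /
   ((al + 2 * l + 1) * (n - k - l))) =
  A / C * ((n - k - l) * (l + 1) / (n - l)) *
  (1 - (k + l - i) * (i + k + l + (al + be + 1)) /
   ((k + l - n) * (al + 2 * l + 1))).
Proof.
move=> -> h1 h2 h3 h4 h5.
have h6 : k + l - n != 0 by rewrite -oppr_eq0; move: h2; congr (_ != _); ring.
field.
by rewrite h1 h2 h3 h4 h5 h6.
Qed.

Lemma part2 (R : realFieldType) (n k l : nat) (alpha beta : R)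
  (hkl : (k + l <= n)%N) (ha : -1 < alpha) (hb : -1 < beta)
  (i : nat) (hi1 : (k + l <= i)%N) (hi2 : (i <= n)%N) :
  let sigma := alpha + beta + 1 in
  let c := cih n k l alpha beta i in
      (k + 1 <= n - l)%N ->
        c (n - l - 1)%N =
        c (n - l)%N * (((n - k - l)%N%:R * (l%:R + 1)) / (n - l)%N%:R)
        * (1 - ((k%:R + l%:R - i%:R) * (i%:R + k%:R + l%:R + sigma))
               / ((k%:R + l%:R - n%:R) * (alpha + (2 * l)%:R + 1))).
Proof.
move=> sigma c hk1; rewrite /c part1 /cih.
have -> : (n - l - (n - l - 1) = 1)%N by lia.
have -> : (n - l - 1 - k = (n - k - l) - 1)%N by lia.
have -> : (n - l - 1 = n - l.+1)%N by lia.
rewrite bin_sub; last by lia.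
rewrite bin_sub; last by lia.
rewrite bin1.
have hc := mul_bin_left n l.
have cl0 : ('C(n, l)%:R : R) != 0 by rewrite pnatr_eq0 -lt0n bin_gt0; lia.
have hl : ((l.+1)%:R : R) != 0 by rewrite pnatr_eq0.
have -> : ('C(n, l.+1)%:R : R) = (l.+1 * 'C(n, l.+1))%N%:R / (l.+1)%:R.
  by rewrite natrM mulrAC divff // mul1r.
rewrite hc natrM.
have ha1 : alpha + 2 * l%:R + 1 != 0.
  rewrite lt0r_neq0 //; move: (ler0n R l); move: (l%:R : R) => t h2; lra.
have hN : ((n - k - l)%N%:R : R) != 0 by rewrite pnatr_eq0; lia.
rewrite hahnQ1; try (exact: ha1); try (exact: hN); try (exact: hkl).
have hln : (l <= n)%N by lia.
have hnl : ((n - l)%N%:R : R) != 0 by rewrite pnatr_eq0; lia.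
rewrite (natrB3 _ _ _ _ hi1) !(natrB3 _ _ _ _ hkl) !(natrB2 _ _ _ hln).
rewrite (natrB3 _ _ _ _ hkl) in hN.
rewrite (natrB2 _ _ _ hln) in hnl.
move: (poch _ _ / _) => A.
rewrite /sigma !natrM.
rewrite (natrB2 _ _ _ hln).
apply: alg2 => //.
by rewrite natr1.
exact: hkl.
Qed.



Lemma alg3 (R : realFieldType) (A c0 c1 c2 d0 d1 d2 Q0 Q1 Q2 n k l h i al be y a b NN m : R) :
  0 <= k -> 0 <= l -> k <= h -> h + 2 <= n - l -> -1 < al ->
  c0 != 0 ->
  y = n - l - h - 1 -> a = al + 2 * l -> b = be + 2 * k -> NN = n - k - l -> m = i - k - l ->
  (h + 1) * c1 = (n - h) * c0 ->
  (h + 2) * c2 = (n - h - 1) * c1 ->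
  (h - k + 1) * d1 = (n - l - h) * d0 ->
  (h - k + 2) * d2 = (n - l - h - 1) * d1 ->
  (y + a + 1) * (y - NN) * Q0 - ((y + a + 1) * (y - NN) + y * (y - b - NN - 1)) * Q1
    + y * (y - b - NN - 1) * Q2 = m * (m + a + b + 1) * Q1 ->
  A / c0 * d0 * Q0 =
  ((n - h) * (h + 1 - k)) / ((n - l - h) * (h + 1))
  * (1 - ((n - l - h - 1) * (h + k + be + 2)) / ((n + l + al - h) * (k - h - 1))
       - ((k + l - i) * (i + k + l + (al + be + 1))) / ((n + l + al - h) * (k - h - 1)))
  * (A / c1 * d1 * Q1)
  + ((n - h - 1) * (n - h - 1 + 1) * ((h + 1 - k) * (h + 1 - k + 1)))
    / ((n - l - h - 1) * (n - l - h - 1 + 1) * ((h + 1) * (h + 1 + 1)))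
    * (((n - l - h - 1) * (h + k + be + 2)) / ((n + l + al - h) * (k - h - 1)))
    * (A / c2 * d2 * Q2).
Proof.
move=> hk0 hl0 hkh hh hal hc0 -> -> -> -> -> e1 e2 e3 e4 hd.
have nz1 : h + 1 != 0 by rewrite lt0r_neq0 //; lra.
have nz2 : h + 2 != 0 by rewrite lt0r_neq0 //; lra.
have nz3 : h - k + 1 != 0 by rewrite lt0r_neq0 //; lra.
have nz4 : h - k + 2 != 0 by rewrite lt0r_neq0 //; lra.
have nz5 : n - h != 0 by rewrite lt0r_neq0 //; lra.
have nz6 : n - h - 1 != 0 by rewrite lt0r_neq0 //; lra.
have nz7 : n - l - h != 0 by rewrite lt0r_neq0 //; lra.
have nz8 : n - l - h - 1 != 0 by rewrite lt0r_neq0 //; lra.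
have nz9 : n + l + al - h != 0 by rewrite lt0r_neq0 //; lra.
have nz10 : k - h - 1 != 0 by rewrite ltr0_neq0 //; lra.
have E1 : c1 = (n - h) * c0 / (h + 1) by rewrite -e1; field.
have E2 : c2 = (n - h - 1) * c1 / (h + 2) by rewrite -e2; field.
have E3 : d1 = (n - l - h) * d0 / (h - k + 1) by rewrite -e3; field.
have E4 : d2 = (n - l - h - 1) * d1 / (h - k + 2) by rewrite -e4; field.

have nzBa : n - l - h - 1 + (al + 2 * l) + 1 != 0 by rewrite lt0r_neq0 //; lra.
have nzBb : n - l - h - 1 - (n - k - l) != 0 by rewrite ltr0_neq0 //; lra.
have E0 : Q0 = ((i - k - l) * ((i - k - l) + (al + 2 * l) + (be + 2 * k) + 1) * Q1
   + ((n - l - h - 1 + (al + 2 * l) + 1) * (n - l - h - 1 - (n - k - l))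
      + (n - l - h - 1) * (n - l - h - 1 - (be + 2 * k) - (n - k - l) - 1)) * Q1
   - (n - l - h - 1) * (n - l - h - 1 - (be + 2 * k) - (n - k - l) - 1) * Q2)
   / ((n - l - h - 1 + (al + 2 * l) + 1) * (n - l - h - 1 - (n - k - l))).
  by rewrite -hd; field; rewrite nzBa nzBb.
rewrite E0 E2 E4 E1 E3.
field.
have nz11 : n - l - h - 1 + 1 != 0 by rewrite lt0r_neq0 //; lra.
by rewrite nz4 nz3 nz2 nz1 hc0 nz5 nz6 nz10 nz9 nz11 nz8.
Qed.





Lemma poch2 (R : realFieldType) (x : R) : poch x 2 = x * (x + 1).
Proof. by rewrite !pochSr poch0 mul1r addr0. Qed.

Lemma part3 (R : realFieldType) (n k l : nat) (alpha beta : R)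
  (hkl : (k + l <= n)%N) (ha : -1 < alpha) (hb : -1 < beta)
  (i : nat) (hi1 : (k + l <= i)%N) (hi2 : (i <= n)%N) :
  let c := cih n k l alpha beta i in
  forall h : nat, (k <= h)%N -> (h + 2 <= n - l)%N ->
        c h = Ffun n k l alpha beta i h * c h.+1
              + Gfun n k l alpha beta h * c h.+2.
Proof.
move=> c h hkh hh.
rewrite /c /cih /Ffun /Gfun /Hfun !poch2.
apply: (@alg3 R (poch (alpha + (2 * l)%:R + 1) (i - k - l) / ((i - k - l)`!)%:R)
  ('C(n, h)%:R) ('C(n, h.+1)%:R) ('C(n, h.+2)%:R)
  ('C(n - k - l, h - k)%:R) ('C(n - k - l, h.+1 - k)%:R) ('C(n - k - l, h.+2 - k)%:R)
  (hahnQ (i - k - l) (n - l - h)%:R (alpha + (2 * l)%:R) (beta + (2 * k)%:R) (n - k - l))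
  (hahnQ (i - k - l) (n - l - h.+1)%:R (alpha + (2 * l)%:R) (beta + (2 * k)%:R) (n - k - l))
  (hahnQ (i - k - l) (n - l - h.+2)%:R (alpha + (2 * l)%:R) (beta + (2 * k)%:R) (n - k - l))
  n%:R k%:R l%:R h%:R i%:R alpha beta
  (n - l - h.+1)%:R (alpha + (2 * l)%:R) (beta + (2 * k)%:R) (n - k - l)%:R (i - k - l)%:R).
- exact: ler0n.
- exact: ler0n.
- by rewrite ler_nat.
- have H : ((h + 2 + l)%N%:R : R) <= n%:R by rewrite ler_nat; lia.
  move: H; rewrite !natrD => H; lra.
- exact: ha.
- by rewrite pnatr_eq0 -lt0n bin_gt0; lia.
- have -> : (n - l - h.+1 = n - (l + h + 1))%N by lia.
  rewrite natrB; last by lia.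
  by rewrite !natrD opprD opprD !addrA.
- by rewrite natrM.
- by rewrite natrM.
- by rewrite natrB3.
- by rewrite natrB3.
- rewrite natr1 -natrM mul_bin_left natrM natrB; [done|lia].
- rewrite (_ : h%:R + 2 = h.+2%:R); last by rewrite -[h.+2]addn2 natrD.
  rewrite -natrM mul_bin_left natrM; congr (_ * _).
  rewrite natrB; last by lia.
  by rewrite -natr1 opprD addrA.
- rewrite (_ : (h.+1 - k = (h - k).+1)%N); last by lia.
  rewrite (_ : h%:R - k%:R + 1 = (h - k).+1%:R); last by rewrite -natr1 natrB.
  rewrite -natrM mul_bin_left natrM; congr (_ * _).
  rewrite (_ : (n - k - l - (h - k) = n - l - h)%N); last by lia.
  by rewrite natrB3 //; lia.
- rewrite (_ : (h.+1 - k = (h - k).+1)%N); last by lia.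
  rewrite (_ : (h.+2 - k = (h - k).+2)%N); last by lia.
  rewrite (_ : h%:R - k%:R + 2 = (h - k).+2%:R); last by rewrite -[(h - k).+2]addn2 natrD natrB.
  rewrite -natrM mul_bin_left natrM; congr (_ * _).
  rewrite (_ : (n - k - l - (h - k).+1 = n - (l + h + 1))%N); last by lia.
  rewrite natrB; last by lia.
  by rewrite !natrD opprD opprD !addrA.
- have ey1 : ((n - l - h)%N%:R : R) = (n - l - h.+1)%N%:R + 1.
    by rewrite natr1; congr (_%:R); lia.
  have ey2 : ((n - l - h.+2)%N%:R : R) = (n - l - h.+1)%N%:R - 1.
    by rewrite (_ : (n - l - h.+1 = (n - l - h.+2).+1)%N) ?addrK -?natr1 ?addrK //; lia.
  rewrite ey1 ey2; apply: hahn_diff; first by lia.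
  move: (ler0n R (2 * l)); move: ((2 * l)%:R : R) => t h2; lra.
Qed.


Theorem theorem1 (R : realFieldType) (n k l : nat) (alpha beta : R)
  (hkl : (k + l <= n)%N) (ha : -1 < alpha) (hb : -1 < beta)
  (i : nat) (hi1 : (k + l <= i)%N) (hi2 : (i <= n)%N) :
  let sigma := alpha + beta + 1 in
  let c := cih n k l alpha beta i in
  [/\ c (n - l)%N =
        poch (alpha + (2 * l)%:R + 1) (i - k - l) / ((i - k - l)`!)%:R
        * ('C(n, l)%:R)^-1,
      (k + 1 <= n - l)%N ->
        c (n - l - 1)%N =
        c (n - l)%N * (((n - k - l)%N%:R * (l%:R + 1)) / (n - l)%N%:R)
        * (1 - ((k%:R + l%:R - i%:R) * (i%:R + k%:R + l%:R + sigma))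
               / ((k%:R + l%:R - n%:R) * (alpha + (2 * l)%:R + 1)))
    & forall h : nat, (k <= h)%N -> (h + 2 <= n - l)%N ->
        c h = Ffun n k l alpha beta i h * c h.+1
              + Gfun n k l alpha beta h * c h.+2 ].
Proof.
move=> sigma c; split.
- exact: (@part1 R n k l alpha beta hkl i).
- exact: (@part2 R n k l alpha beta hkl ha hb i hi1 hi2).
- exact: (@part3 R n k l alpha beta hkl ha hb i hi1 hi2).
Qed.
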